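(* Let $(\Gamma,\mathfrak o,\mathfrak m,\mathfrak q)$ be a quantized Brauer graph such that $\Gamma$ is not the graph $\mathbb A_2$ (a single edge with two distinct endpoints), and let $A_\Gamma=KQ_\Gamma/I_\Gamma$ be the associated Brauer graph algebra. Let $\rho\subseteq\rho_\Gamma$ be a minimal generating set of $I_\Gamma$ chosen from the set $\rho_\Gamma$ of Brauer graph relations. Then $\rho$ contains all the relations of type one and all the relations of type three, and $\rho$ contains the relation of type two associated to an edge $s$ truncated at a vertex $\alpha$ if and only if the successor $s_1$ of $s$ at its other endpoint $\beta$ is also a truncated edge (i.e. $s_1$ is truncated at its other endpoint).
   Context: Let $K$ be a field. A Brauer graph $(\Gamma,\mathfrak o,\mathfrak m)$ consists of a finite connected graph $\Gamma$ with at least one edge (loops and multiple edges allowed), a multiplicity function $\mathfrak m:\Gamma_0\to\mathbb Z_{>0}$ on the vertex set $\Gamma_0$, and, for each vertex $\alpha$, a cyclic ordering $\mathfrak o$ of the edges incident with $\alpha$ (a loop at $\alpha$ occurs twice in this cyclic ordering, the two occurrences being treated as distinct). The valency $\mathrm{val}(\alpha)$ is the number of edges incident with $\alpha$, loops counted twice. An edge $t$ is the successor of $s$ at $\alpha$ if $t$ directly follows $s$ in the cyclic ordering at $\alpha$ (if $\mathrm{val}(\alpha)=1$ the unique edge is its own successor). An edge $s$ is truncated at $\alpha$ if $\mathrm{val}(\alpha)=1$, $\mathfrak m(\alpha)=1$ and $s$ is the edge at $\alpha$; $s$ is a truncated edge if it is truncated at one of its endpoints. The successor sequence of $s$ at $\alpha$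 is $s=s_0,s_1,\dots,s_{\mathrm{val}(\alpha)-1}$ with $s_{i+1}$ the successor of $s_i$ at $\alpha$. A quantizing function $\mathfrak q$ assigns $\mathfrak q_{s,\alpha}\in K\setminus\{0\}$ to each pair $(s,\alpha)$ with $s$ incident with $\alpha$ and $s$ not truncated at either endpoint; $(\Gamma,\mathfrak o,\mathfrak m,\mathfrak q)$ is a quantized Brauer graph. The Brauer graph algebra $A_\Gamma=KQ_\Gamma/I_\Gamma$ (paths written left to right) is: if $\Gamma=\mathbb A_2$ with both multiplicities $1$, $A_\Gamma=K[x]/(x^2)$. Otherwise $Q_\Gamma$ has a vertex $v_s$ for each edge $s$, and for each vertex $\alpha$ and each occurrence of $t$ as the successor of $s$ at $\alpha$ with $s$ not truncated at $\alpha$, an arrow $v_s\to v_t$. For $s$ at $\alpha$ not truncated at $\alpha$, with successor sequence $s_0,\dots,s_{v-1}$, $v=\mathrm{val}(\alpha)$, $s_v=s_0$, let $C_{s,\alpha}=a_0a_1\cdots a_{v-1}$, where $a_r$ is the arrow for $s_{r+1}$ succeeding $s_r$ at $\alpha$. The set $\rho_\Gamma$ of Brauer graph relations consists of: type one: for each edge $s$ with endpoints $\alpha,\beta$ not truncated at either, $\mathfrak q_{s,\alpha}C_{s,\alpha}^{\mathfrak m(\alpha)}-\mathfrak q_{s,\beta}C_{s,\beta}^{\mathfrak m(\beta)}$; type two: for each edge $s$ truncated at $\alpha$ with other endpoint $\beta$, writing $C_{s,\beta}=b_0b_1\cdots b_{\mathrm{val}(\beta)-1}$, the path $C_{s,\beta}^{\mathfrak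 m(\beta)}b_0$; type three: each path $ab$ of length $2$ in $Q_\Gamma$ that is not a subpath of any $C_{t,\gamma}$. $I_\Gamma$ is the ideal generated by $\rho_\Gamma$. *)

(* Defs.v *)
From HB Require Import structures.
From mathcomp Require Import all_boot all_order all_algebra all_fingroup.
Set Implicit Arguments. Unset Strict Implicit. Unset Printing Implicit Defensive.
Import GRing.Theory.
Local Open Scope ring_scope.

(* A quantized Brauer graph, encoded by halfT-edges (occurrences of edges at
   vertices):
   - [halfT]  : the finite set of halfT-edges (pairs (edge, endpoint occurrence);
               a loop contributes two halfT-edges at the same vertex);
   - [edgeT] : the finite set of edges, [edge h] the edge of halfT-edge h;
   - [other h] : the other halfT-edge of the same edge;
   - [succ]  : the permutation of halfT-edges whose cycles are the vertices,
               [succ h] being the occurrence that directly follows h in the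
               cyclic ordering at the vertex of h;
   - [mult h]  : multiplicity of the vertex of h;
   - [quant h] : the quantizing value q_{edge h, vertex of h}. *)
Record qbgraph (K : fieldType) := QBGraph {
  halfT : finType;
  edgeT : finType;
  edge : halfT -> edgeT;
  other : halfT -> halfT;
  succ : {perm halfT};
  mult : halfT -> nat;
  quant : halfT -> K }.

Section Brauer.
Variables (K : fieldType) (G : qbgraph K).
Local Notation H := (halfT G).
Local Notation E := (edgeT G).
Local Notation e := (@edge K G).
Local Notation iota := (@other K G).
Local Notation sg := (@succ K G).
Local Notation m := (@mult K G).

Definition valency (h : H) : nat := fingraph.order sg h.

Definition trunc_at (h : H) : bool := (valency h == 1%N) && (m h == 1%N).

Definition qbg_axioms : Prop :=
  (forall h, [/\ iota (iota h) = h, iota h != h & e (iota h) = e h]) /\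
  (forall h h', e h = e h' -> h' = h \/ h' = iota h) /\
  (forall s : E, exists h, e h = s) /\
  (0 < #|{: H}|)%N /\
  (forall h h', connect (fun x y => (y == sg x) || (y == iota x)) h h') /\
  (forall h, m (sg h) = m h /\ (0 < m h)%N) /\
  (forall h, ~~ trunc_at h -> ~~ trunc_at (iota h) -> @quant K G h != 0).

Definition is_A2 : Prop := #|{: E}| = 1%N /\ (forall h, sg h = h).

(* Quiver Q_Gamma: vertices = edges; arrows = halfT-edges h not truncated,
   arrow h : v_(e h) -> v_(e (succ h)). A path is a start vertex together
   with a (left-to-right) sequence of arrows. *)
Definition arrow_ok (a : H) : bool := ~~ trunc_at a.
Definition qpath := (E * seq H)%type.
Definition tgt (p : qpath) : E :=
  if p.2 is a :: s then e (sg (last a s)) else p.1.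
Definition valid (p : qpath) : bool :=
  match p.2 with
  | [::] => true
  | a :: s => [&& e a == p.1, path (fun x y => e (sg x) == e y) a s
                 & all arrow_ok (a :: s)]
  end.
Definition pmul (p u : qpath) : option qpath :=
  if tgt p == u.1 then Some (p.1, p.2 ++ u.2) else None.

(* Elements of KQ_Gamma, given by their coefficient on each path *)
Definition qfun := qpath -> K.
Definition pathf (p : qpath) : qfun := fun w => (w == p)%:R.

(* C_{s,alpha} for the occurrence h of s at alpha, and its powers *)
Definition cycle_arrows (h : H) : seq H := traject sg h (valency h).
Definition Cpow (h : H) (k : nat) : qpath :=
  (e h, flatten (nseq k (cycle_arrows h))).

Definition rel1 (h : H) : qfun := fun w =>
  @quant K G h * pathf (Cpow h (m h)) w
  - @quant K G (iota h) * pathf (Cpow (iota h) (m (iota h))) w.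
Definition rel2 (h : H) : qfun :=
  pathf (e h, (Cpow (iota h) (m (iota h))).2 ++ [:: iota h]).
Definition rel3 (a b : H) : qfun := pathf (e a, [:: a; b]).

Definition in_some_cycle (a b : H) : bool :=
  [exists h, arrow_ok h && infix [:: a; b] (Cpow h (m h)).2].

(* fixed choice of orientation of each edge for its type one relation *)
Definition edge_rep (s : E) : option H := [pick h | e h == s].

Definition is_rel1 (x : qfun) : Prop := exists s h,
  [/\ edge_rep s = Some h, ~~ trunc_at h, ~~ trunc_at (iota h) & x = rel1 h].
Definition is_rel2 (x : qfun) : Prop := exists h, trunc_at h /\ x = rel2 h.
Definition is_rel3 (x : qfun) : Prop := exists a b,
  [/\ arrow_ok a, arrow_ok b, e (sg a) = e b, ~~ in_some_cycle a b
    & x = rel3 a b].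
Definition brauer_relations (x : qfun) : Prop :=
  is_rel1 x \/ is_rel2 x \/ is_rel3 x.

(* coefficient of w in p * r * q, for paths p, q and r in KQ *)
Definition sandwich (p : qpath) (r : qfun) (q : qpath) (w : qpath) : K :=
  let u := (tgt p, drop (size p.2) (take (size w.2 - size q.2) w.2)) in
  if (size p.2 + size q.2 <= size w.2)%N &&
     (obind (fun pu => pmul pu q) (pmul p u) == Some w)
  then r u else 0.

Definition gen_ideal (S : qfun -> Prop) (x : qfun) : Prop :=
  exists n (c : 'I_n -> K) (p q : 'I_n -> qpath) (r : 'I_n -> qfun),
    (forall i, [/\ S (r i), valid (p i) & valid (q i)]) /\
    (forall w, x w = \sum_(i < n) c i * sandwich (p i) (r i) (q i) w).

Definition generates (S : qfun -> Prop) : Prop :=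
  forall x, gen_ideal S x <-> gen_ideal brauer_relations x.

Definition minimal_generating (rho : qfun -> Prop) : Prop :=
  generates rho /\
  forall rho' : qfun -> Prop, (forall x, rho' x -> rho x) ->
    ~ (forall x, rho x -> rho' x) -> ~ generates rho'.

End Brauer.

(* Main.v *)
Require Import Defs.
From HB Require Import structures.
From mathcomp Require Import all_boot all_order all_algebra all_fingroup.
From mathcomp Require Import ring zify.
From Stdlib Require Import Classical.
Set Implicit Arguments. Unset Strict Implicit. Unset Printing Implicit Defensive.
Import GRing.Theory.

Section Aux.
Variables (K : fieldType) (G : qbgraph K).
Hypothesis HG : qbg_axioms G.
Local Notation H := (halfT G).
Local Notation E := (edgeT G).
Local Notation e := (@edge K G).
Local Notation iota := (@other K G).
Local Notation sg := (@succ K G).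
Local Notation m := (@mult K G).
Local Notation val := (@valency K G).
Local Notation trunc := (@trunc_at K G).
Local Notation Cp := (@Cpow K G).

Lemma iotaK h : iota (iota h) = h.
Proof. by case: HG => A _; case: (A h). Qed.
Lemma iota_neq h : iota h != h.
Proof. by case: HG => A _; case: (A h). Qed.
Lemma e_iota h : e (iota h) = e h.
Proof. by case: HG => A _; case: (A h). Qed.
Lemma edge_inv h h' : e h = e h' -> h' = h \/ h' = iota h.
Proof. by case: HG => _ [A _]; apply: A. Qed.
Lemma m_succ h : m (sg h) = m h.
Proof. by case: HG => _ [_ [_ [_ [_ [A _]]]]]; case: (A h). Qed.
Lemma m_gt0 h : (0 < m h)%N.
Proof. by case: HG => _ [_ [_ [_ [_ [A _]]]]]; case: (A h). Qed.
Lemma sg_inj : injective sg. Proof. exact: perm_inj. Qed.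
Lemma val_gt0 h : (0 < val h)%N. Proof. by rewrite /valency; apply: fingraph.order_gt0. Qed.
Lemma iter_val h : iter (val h) sg h = h.
Proof. by rewrite /valency; apply: (iter_order sg_inj). Qed.

Lemma conn_val x y : fconnect sg x y -> val y = val x.
Proof.
move=> cxy; rewrite /valency /order; apply: eq_card => z.
rewrite !inE; apply/idP/idP => [cyz|cxz]; first exact: connect_trans cxy cyz.
by apply: connect_trans cxz; rewrite (fconnect_sym sg_inj).
Qed.

Lemma conn_m x y : fconnect sg x y -> m y = m x.
Proof.
move=> cxy; rewrite -(iter_findex cxy); elim: (findex _ x y) => //= n IH.
by rewrite m_succ IH.
Qed.

Lemma conn_trunc x y : fconnect sg x y -> trunc y = trunc x.
Proof. by move=> cxy; rewrite /trunc_at (conn_val cxy) (conn_m cxy). Qed.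

Lemma iter_valk h k : iter (val h * k) sg h = h.
Proof.
elim: k => [|k IH]; first by rewrite muln0.
by rewrite mulnS iterD IH iter_val.
Qed.

Lemma traject_add (T : Type) (f : T -> T) x n k :
  traject f x (n + k) = traject f x n ++ traject f (iter n f x) k.
Proof. by elim: n x => [|n IH] x //=; rewrite IH -iterSr. Qed.

Lemma Cpow_traj h k : (Cp h k).2 = traject sg h (val h * k).
Proof.
rewrite /Cpow /cycle_arrows /=; elim: k => [|k IH]; first by rewrite muln0.
by rewrite /= IH mulnS traject_add iter_val. 
Qed.

Lemma traj_conn x n y : y \in traject sg x n -> fconnect sg x y.
Proof. by case/trajectP => i _ ->; apply: fconnect_iter. Qed.

Lemma tgt_cat v s a t : tgt (v, s ++ a :: t) = e (sg (last a t)).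
Proof. by case: s => [|b s]; rewrite /tgt /= ?last_cat. Qed.

Lemma tgt_Cpow h k : tgt (Cp h k) = e h.
Proof.
rewrite /tgt Cpow_traj.
case E: (val h * k)%N => [|n] //=.
by rewrite last_traject -iterS -E iter_valk.
Qed.

Lemma val_sg h : val (sg h) = val h.
Proof. by apply: conn_val; apply: fconnect1. Qed.

Lemma Cpow_rot h k : (Cp h k).2 ++ [:: h] = h :: (Cp (sg h) k).2.
Proof.
rewrite !Cpow_traj val_sg cats1.
by rewrite -trajectS trajectSr iter_valk.
Qed.

Lemma infix_frel x s a b : path (frel sg) x s -> infix [:: a; b] (x :: s) -> b = sg a.
Proof.
elim: s x => [|y s IH] x; first by move=> _; rewrite infixs1 => /orP[] /eqP.
move=> /= /andP[/eqP xy ps] /orP[/and3P[/eqP-> /eqP-> _]|Hs]; first by rewrite xy.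
exact: (IH y ps Hs).
Qed.

Lemma infix_Cpow g k a b : infix [:: a; b] (Cp g k).2 -> b = sg a.
Proof.
rewrite Cpow_traj; case: (val g * k)%N => [|n] /=; first by [].

by apply: infix_frel; apply: fpath_traject.
Qed.

Lemma Cpow_head g k : (0 < k)%N -> exists t, (Cp g k).2 = g :: t.
Proof.
move=> k0; rewrite Cpow_traj; have : (0 < val g * k)%N by rewrite muln_gt0 val_gt0.
by case: (val g * k)%N => [|n] //= _; eexists.
Qed.

Lemma size_Cpow g k : size (Cp g k).2 = (val g * k)%N.
Proof. by rewrite Cpow_traj size_traject. Qed.

Lemma mem_Cpow g k y : y \in (Cp g k).2 -> fconnect sg g y.
Proof. by rewrite Cpow_traj; apply: traj_conn. Qed.


Lemma sg_fix h : val h = 1%N -> sg h = h.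
Proof. by move=> v1; have := iter_val h; rewrite v1. Qed.

Lemma notA2_val (notA2 : ~ is_A2 G) h : val h = 1%N -> val (iota h) = 1%N -> False.
Proof.
move=> v1 v2; apply: notA2.
have s1 := sg_fix v1; have s2 := sg_fix v2.
have step x z : (x == h) || (x == iota h) -> (z == sg x) || (z == iota x) ->
    (z == h) || (z == iota h).
  by move=> /orP[]/eqP-> /orP[]/eqP->; rewrite ?s1 ?s2 ?iotaK eqxx ?orbT.
have gen x p : (x == h) || (x == iota h) ->
    path (fun x y => (y == sg x) || (y == iota x)) x p ->
    (last x p == h) || (last x p == iota h).
  elim: p x => [|z p IH] x //= hx /andP[r pp].
  exact: IH _ (step _ _ hx r) pp.
have inA y : (y == h) || (y == iota h).
  case: HG => _ [_ [_ [_ [C _]]]].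
  have /connectP[p pp ->] := C h y.
  by apply: gen pp; rewrite eqxx.
split; last first.
  by move=> y; case/orP: (inA y) => /eqP->.
apply/eqP/card1P; exists (e h) => s; rewrite !inE.
case: HG => _ [_ [Es _]]; have [y <-] := Es s.
by case/orP: (inA y) => /eqP->; rewrite ?e_iota eqxx.
Qed.


Definition pcat (p Z q : qpath G) := obind (fun pu => pmul pu q) (pmul p Z).

Lemma pcatE p Z q w : pcat p Z q = Some w ->
  [/\ tgt p = Z.1, tgt (p.1, p.2 ++ Z.2) = q.1 & w = (p.1, p.2 ++ Z.2 ++ q.2)].
Proof.
rewrite /pcat /pmul; case: eqP => //= tp; case: eqP => //= tq [<-].
by rewrite catA.
Qed.

Lemma sand_pathf p Z q w : sandwich p (pathf Z) q w = ((pcat p Z q == Some w)%:R : K)%R.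
Proof.
rewrite /sandwich /pathf.
case E: (pcat p Z q == Some w).
  have [tp tq ew] := pcatE (eqP E).
  have uZ : ((tgt p, drop (size p.2) (take (size w.2 - size q.2) w.2)) : qpath G) = Z.
    rewrite ew /= catA size_cat addnK take_size_cat ?size_cat //.
    by rewrite drop_size_cat // tp -surjective_pairing.
  by rewrite uZ -/(pcat _ _ _) E ew /= !size_cat leq_add2l leq_addl eqxx.
case: ifP => // /andP[_ C]; case: eqP => uZ //.
by move: E; rewrite /pcat -uZ C.
Qed.

Lemma sand_lin (p q : qpath G) (a b : K) (f g : qfun G) w :
  sandwich p (fun z => a * f z - b * g z)%R q w =
  (a * sandwich p f q w - b * sandwich p g q w)%R.
Proof. by rewrite /sandwich; case: ifP => _ //; rewrite !mulr0 subr0. Qed.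


Lemma sand_nz (p q : qpath G) (r : qfun G) w : sandwich p r q w != 0%R ->
  exists2 u : qpath G, r u != 0%R & infix u.2 w.2.
Proof.
rewrite /sandwich; case: ifP => [_ nz|]; last by rewrite eqxx.
eexists; first exact: nz.
by apply: infix_trans (infix_take _ (size w.2 - size q.2)); apply: infix_drop.
Qed.

Lemma phi_arg (S : qfun G -> Prop) x w0 :
  gen_ideal S x -> x w0 != 0%R ->
  (forall r u, S r -> r u != 0%R -> infix u.2 w0.2 -> False) -> False.
Proof.
case=> n [c [p [q [r [Hr Hx]]]]] nz Hind; move: nz; rewrite Hx big1 ?eqxx //.
move=> i _; case: (eqVneq (sandwich (p i) (r i) (q i) w0) 0%R) => [->|nz].
  by rewrite mulr0.
have [u ru iu] := sand_nz nz; exfalso; apply: (Hind (r i) u) => //.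
by case: (Hr i).
Qed.

Lemma gen_single (S : qfun G -> Prop) (x : qfun G) v v' : S x ->
  (forall w, x w != 0%R -> w.1 = v /\ tgt w = v') -> gen_ideal S x.
Proof.
move=> Sx Hx; exists 1%N, (fun _ => 1%R), (fun _ => (v, [::])),
  (fun _ => (v', [::])), (fun _ => x); split=> [i|w]; first by split.
rewrite big_ord1 mul1r /sandwich /= subn0 take_size drop0.
have tv : tgt (v, [::]) = v by [].
rewrite /pmul tv eqxx /= cats0.
case: (eqVneq (x w) 0%R) => xw.
  case: ifP => //; case: (_ =P v') => //= _ /eqP [ew].
  by rewrite -ew.
have [w1 tw] := Hx w xw.
have ew : w = (v, w.2) by rewrite -w1 -surjective_pairing.
by rewrite -ew tw !eqxx.
Qed.


Lemma gen_mono (S S' : qfun G -> Prop) x : (forall r, S r -> S' r) ->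
  gen_ideal S x -> gen_ideal S' x.
Proof.
move=> SS [n [c [p [q [r [Hr Hx]]]]]]; exists n, c, p, q, r; split => // i.
by case: (Hr i) => *; split => //; apply: SS.
Qed.

Lemma gen_subst (S S' : qfun G -> Prop) x :
  (forall r p q, S r -> valid p -> valid q ->
     exists t : (K * K * qpath G * qpath G * qpath G * qpath G * qfun G * qfun G)%type,
     let: (c1, c2, p1, q1, p2, q2, r1, r2) := t in
     [/\ S' r1, S' r2, [&& valid p1, valid q1, valid p2 & valid q2] &
      forall w, sandwich p r q w =
        (c1 * sandwich p1 r1 q1 w + c2 * sandwich p2 r2 q2 w)%R]) ->
  gen_ideal S x -> gen_ideal S' x.
Proof.
move=> Hsub [n [c [p [q [r [Hr Hx]]]]]].
have [f Hf] := fin_all_exists (fun i : 'I_n =>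
  let: And3 Sr vp vq := Hr i in Hsub (r i) (p i) (q i) Sr vp vq).
pose F (i : 'I_(n + n)) :=
  match split i with
  | inl i => let: (c1, c2, p1, q1, p2, q2, r1, r2) := f i in (c i * c1, p1, q1, r1)
  | inr i => let: (c1, c2, p1, q1, p2, q2, r1, r2) := f i in (c i * c2, p2, q2, r2)
  end%R.
exists (n + n)%N, (fun i => (F i).1.1.1), (fun i => (F i).1.1.2),
  (fun i => (F i).1.2), (fun i => (F i).2); split.
  move=> i; rewrite /F; case: (split i) => j; have := Hf j;
  case: (f j) => [[[[[[[c1 c2] p1] q1] p2] q2] r1] r2] /= [S1 S2 /and4P[? ? ? ?] _];
  by split.
move=> w; rewrite Hx big_split_ord /= -big_split /=; apply: eq_bigr => i _.
rewrite /F (unsplitK (inl _ : 'I_n + 'I_n)) (unsplitK (inr _ : 'I_n + 'I_n)).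
have := Hf i; case: (f i) => [[[[[[[c1 c2] p1] q1] p2] q2] r1] r2] /= [_ _ _ ->].
by rewrite mulrDr !mulrA.
Qed.


Lemma rel1_supp h u : rel1 h u != 0%R ->
  u = Cp h (m h) \/ u = Cp (iota h) (m (iota h)).
Proof.
rewrite /rel1 /pathf; case: (u =P Cp h (m h)) => [->|_]; first by left.
by case: (u =P _) => [->|_]; [right | rewrite !mulr0 subrr eqxx].
Qed.

Lemma rel2_supp h u : rel2 h u != 0%R ->
  u = (e h, (Cp (iota h) (m (iota h))).2 ++ [:: iota h]).
Proof. by rewrite /rel2 /pathf; case: (u =P _) => // _; rewrite eqxx. Qed.

Lemma rel3_supp a b u : rel3 a b u != 0%R -> u = (e a, [:: a; b]).
Proof. by rewrite /rel3 /pathf; case: (u =P _) => // _; rewrite eqxx. Qed.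

Lemma edge_rep_e s h : edge_rep s = Some h -> e h = s.
Proof. by rewrite /edge_rep; case: pickP => // y /eqP <- [<-]. Qed.

Lemma edge_rep_ex x : exists y, edge_rep (e x) = Some y.
Proof.
rewrite /edge_rep; case: pickP => [y _|/(_ x)]; first by exists y.
by rewrite eqxx.
Qed.

Lemma infix_eq_size (s t : seq H) : infix s t -> size s = size t -> s = t.
Proof.
case/infixP=> [s1 [s2 ->]]; rewrite !size_cat => E.
case: s1 s2 E => [|a1 s1] [|a2 s2] /= E; first by rewrite cats0.
all: lia.
Qed.

Lemma quant_nz h : ~~ trunc h -> ~~ trunc (iota h) -> @quant K G h != 0%R.
Proof. by case: HG => _ [_ [_ [_ [_ [_ Q]]]]]; apply: Q. Qed.

Lemma Cpow_head_m g : exists t, (Cp g (m g)).2 = g :: t.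
Proof. exact: Cpow_head (m_gt0 g). Qed.

Lemma same_Cpow g h : infix (Cp g (m g)).2 (Cp h (m h)).2 -> g = h.
Proof.
move=> inf; have [t Et] := Cpow_head_m g; have [t' Et'] := Cpow_head_m h.
have cg : fconnect sg h g.
  by apply: (mem_Cpow (k := m h)); apply: (mem_infix inf); rewrite Et mem_head.
have E2 : size (Cp g (m g)).2 = size (Cp h (m h)).2.
  by rewrite !size_Cpow (conn_val cg) (conn_m cg).
by have := infix_eq_size inf E2; rewrite Et Et' => -[].
Qed.


Local Notation BR := (@brauer_relations K G).

Lemma brauer_single x : BR x -> gen_ideal BR x.
Proof.
move=> bx; have single Z : x = pathf Z -> gen_ideal BR x.
  move=> xZ; apply: (gen_single (v := Z.1) (v' := tgt Z)) => // w.
  by rewrite xZ /pathf; case: (w =P Z) => [->|]; rewrite ?eqxx.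
case: (bx) => [[s [h [_ _ _ ex]]]|[[h [_ ex]]|[a [b [_ _ _ _ ex]]]]]; subst x;
  [|exact: (single _ erefl)|exact: (single _ erefl)].
apply: (gen_single (v := e h) (v' := e h)) => // w /rel1_supp[]->.
  by rewrite tgt_Cpow.
by rewrite tgt_Cpow /= e_iota.
Qed.

Variable notA2 : ~ is_A2 G.
Variable rho : qfun G -> Prop.
Hypothesis rho_sub : forall x, rho x -> BR x.
Hypothesis rho_gen : generates rho.

Lemma in_rho x w0 : BR x -> x w0 != 0%R ->
  (forall r u, BR r -> r <> x -> r u != 0%R -> infix u.2 w0.2 -> False) -> rho x.
Proof.
move=> bx nz Hind; apply: NNPP => nrho.
apply: (phi_arg (S := rho) (x := x) (w0 := w0)) => //.
  by apply/(rho_gen x).2; apply: brauer_single.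
move=> r u rr ru iu; apply: (Hind r u (rho_sub rr) _ ru iu) => erx.
by apply: nrho; rewrite -erx.
Qed.


Lemma Cpow_neq_iota h : (Cp h (m h) == Cp (iota h) (m (iota h))) = false.
Proof.
apply/eqP => E; have [t Et] := Cpow_head_m h; have [t' Et'] := Cpow_head_m (iota h).
move: (congr1 snd E); rewrite Et Et' => -[] /eqP.
by rewrite eq_sym (negbTE (iota_neq h)).
Qed.

Lemma part1 s h : edge_rep s = Some h -> ~~ trunc h -> ~~ trunc (iota h) ->
  rho (rel1 h).
Proof.
move=> es nh nih.
have bx : BR (rel1 h) by left; exists s, h.
apply: (in_rho (w0 := Cp h (m h))) => //.
  rewrite /rel1 /pathf eqxx Cpow_neq_iota mulr1 mulr0 subr0.
  exact: quant_nz.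
move=> r u br rx ru iu.
case: br => [[s' [h' [es' nh' nih' er]]]|[[h' [th' er]]|[a [b [_ _ _ nc er]]]]];
  subst r.
- have [ug|ug] := rel1_supp ru; subst u.
    by have hh := same_Cpow iu; subst h'; apply: rx.
  have hh := same_Cpow iu; subst h.
  have e1 := edge_rep_e es; have e2 := edge_rep_e es'.
  rewrite e_iota in e1; subst s s'.
  by move: es; rewrite es' => -[] /eqP; rewrite eq_sym (negbTE (iota_neq h')).
- have eu := rel2_supp ru; subst u.
  have c : fconnect sg h (iota h').
    apply: (mem_Cpow (k := m h)); apply: (mem_infix iu).
    by rewrite mem_cat mem_seq1 eqxx orbT.
  have := size_infix iu; rewrite /= size_cat !size_Cpow (conn_val c) (conn_m c).
  by rewrite addn1 ltnn.
- have eu := rel3_supp ru; subst u.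
  by move/negP: nc; apply; apply/existsP; exists h; rewrite /arrow_ok nh iu.
Qed.


Lemma cyc_small g a b : ~~ trunc g -> infix (Cp g (m g)).2 [:: a; b] ->
  in_some_cycle a b.
Proof.
move=> ng iu; have := size_infix iu; rewrite size_Cpow /=.
have p1 := val_gt0 g; have p2 := m_gt0 g.
case E: (val g * m g)%N => [|[|[|n]]] // _.
- by have := muln_gt0 (val g) (m g); rewrite E p1 p2.
- move/eqP: E; rewrite muln_eq1 => /andP[/eqP v1 /eqP m1].
  by move: ng; rewrite /trunc_at v1 m1.
- have E2 : size (Cp g (m g)).2 = size [:: a; b] by rewrite size_Cpow E.
  apply/existsP; exists g; rewrite /arrow_ok ng /=.
  by rewrite -(infix_eq_size iu E2) infix_refl.
Qed.

Lemma trunc_val h : trunc h -> val h = 1%N.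
Proof. by case/andP => /eqP. Qed.

Lemma part2 a b : arrow_ok a -> arrow_ok b -> e (sg a) = e b ->
  ~~ in_some_cycle a b -> rho (rel3 a b).
Proof.
move=> oa ob eab nc.
have bx : BR (rel3 a b) by right; right; exists a, b.
apply: (in_rho (w0 := (e a, [:: a; b]))) => //.
  by rewrite /rel3 /pathf eqxx oner_eq0.
move=> r u br rx ru iu.
case: br => [[s' [h' [es' nh' nih' er]]]|[[h' [th' er]]|[a' [b' [_ _ _ nc' er]]]]];
  subst r.
- by have [ug|ug] := rel1_supp ru; subst u; move/negP: nc; apply; apply: cyc_small iu.
- have eu := rel2_supp ru; subst u.
  have := size_infix iu; rewrite /= size_cat size_Cpow addn1 ltnS.
  have p1 := val_gt0 (iota h'); have p2 := m_gt0 (iota h').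
  case E: (val (iota h') * m (iota h'))%N => [|[|n]] // _.
    by have := muln_gt0 (val (iota h')) (m (iota h')); rewrite E p1 p2.
  move/eqP: E; rewrite muln_eq1 => /andP[/eqP v1 _].
  exact: (notA2_val notA2 (trunc_val th') v1).
- have eu := rel3_supp ru; subst u.
  have := infix_eq_size iu erefl => -[ea eb]; subst a' b'.
  by apply: rx.
Qed.


Lemma val_iota_trunc h : trunc h -> (1 < val (iota h))%N.
Proof.
move=> th; have := val_gt0 (iota h); case E: (val (iota h)) => [|[|n]] // _.
by case: (notA2_val notA2 (trunc_val th) E).
Qed.

Lemma core_rel1 ih g : (1 < val ih)%N ->
  infix (Cp g (m g)).2 (ih :: (Cp (sg ih) (m ih)).2) -> g = ih \/ g = sg ih.
Proof.
move=> v2 iu; have [t Et] := Cpow_head_m g.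
have c : fconnect sg ih g.
  have : g \in ih :: (Cp (sg ih) (m ih)).2 by apply: (mem_infix iu); rewrite Et mem_head.
  rewrite in_cons => /orP[/eqP->|]; first exact: connect0.
  by move/mem_Cpow; apply: connect_trans; apply: fconnect1.
have [t' Et'] := Cpow_head (sg ih) (m_gt0 ih).
move: iu; rewrite Et Et' => /infixP[s1 [s2 E]].
have st' : (size t').+1 = (val ih * m ih)%N.
  by have := size_Cpow (sg ih) (m ih); rewrite Et' /= val_sg.
have st : (size t).+1 = (val ih * m ih)%N.
  by have := size_Cpow g (m g); rewrite Et /= (conn_val c) (conn_m c).
have := congr1 size E; rewrite /= !size_cat /=.
case: s1 E => [|c1 [|c2 s1]] /= E.
- by case: E => ->; left.
- by case: E => _ ->; right.
- move=> E2; exfalso; move: E2 st st'; rewrite size_cat; lia.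
Qed.

Lemma part3b h : trunc h -> trunc (iota (sg (iota h))) -> rho (rel2 h).
Proof.
move=> th tx; set ih := iota h; set X := sg ih.
have v2 : (1 < val ih)%N by apply: val_iota_trunc.
have nih : ~~ trunc ih by rewrite /trunc_at; case: eqP v2 => // ->.
have mX : m X = m ih by apply: m_succ.
have tX : trunc X = trunc ih by apply: conn_trunc; apply: fconnect1.
have bx : BR (rel2 h) by right; left; exists h.
apply: (in_rho (w0 := (e h, (Cp ih (m ih)).2 ++ [:: ih]))) => //.
  by rewrite /rel2 /pathf eqxx oner_eq0.
move=> r u br rx ru iu; rewrite /= Cpow_rot -/X in iu.
case: br => [[s' [h' [es' nh' nih' er]]]|[[h' [th' er]]|[a' [b' [_ _ _ nc' er]]]]];
  subst r.
- have key g : ~~ trunc g -> ~~ trunc (iota g) -> u = Cp g (m g) -> False.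
    move=> ng nig eu; subst u; case: (core_rel1 v2 iu) => eg; subst g.
      by move: nig; rewrite iotaK th.
    by move: nig; rewrite tx.
  have [ug|ug] := rel1_supp ru; first exact: (key h').
  by apply: (key (iota h')) => //; rewrite iotaK.
- have eu := rel2_supp ru; subst u.
  change (is_true (infix ((Cp (iota h') (m (iota h'))).2 ++ [:: iota h']) (ih :: (Cp X (m ih)).2))) in iu.
  rewrite Cpow_rot in iu.
  have c : fconnect sg ih (iota h').
    have : iota h' \in ih :: (Cp X (m ih)).2 by apply: (mem_infix iu); rewrite mem_head.
    rewrite in_cons => /orP[/eqP->|]; first exact: connect0.
    by move/mem_Cpow; apply: connect_trans; apply: fconnect1.
  have E2 : size (iota h' :: (Cp (sg (iota h')) (m (iota h'))).2) =
            size (ih :: (Cp X (m ih)).2).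
    by rewrite /= !size_Cpow !val_sg (conn_val c) (conn_m c).
  have := infix_eq_size iu E2 => -[ei _].
  by apply: rx; rewrite -(iotaK h') ei /ih iotaK.
- have eu := rel3_supp ru; subst u.
  change (is_true (infix [:: a'; b'] (ih :: (Cp X (m ih)).2))) in iu.
  move/negP: nc'; apply; move: iu; rewrite infix_consl => /orP[|iu].
    have [t Et] := Cpow_head X (m_gt0 ih).
    rewrite Et /= => /andP[/eqP -> /andP[/eqP -> _]].
    apply/existsP; exists ih; rewrite /arrow_ok nih andTb Cpow_traj.
    case E: (val ih * m ih)%N => [|[|n]].
    + by have := muln_gt0 (val ih) (m ih); rewrite E val_gt0 m_gt0.
    + by move/eqP: E; rewrite muln_eq1 => /andP[/eqP E _]; rewrite E in v2.
    + by rewrite 2!trajectS; apply: prefixW; rewrite /X /= !eqxx prefix0s.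
  apply/existsP; exists X; rewrite /arrow_ok tX nih /= mX; exact: iu.
Qed.


Lemma pcat_some (p Z q : qpath G) : tgt p = Z.1 -> tgt (p.1, p.2 ++ Z.2) = q.1 ->
  pcat p Z q = Some (p.1, p.2 ++ Z.2 ++ q.2).
Proof. by rewrite /pcat /pmul => -> /=; rewrite eqxx /= => ->; rewrite eqxx catA. Qed.

Lemma pcat_none (p Z q : qpath G) :
  ~~ ((tgt p == Z.1) && (tgt (p.1, p.2 ++ Z.2) == q.1)) -> pcat p Z q = None.
Proof. by rewrite /pcat /pmul; case: eqP => //= _; case: eqP. Qed.

Lemma tgt_cat_Cpow (v : E) (s : seq H) g : tgt (v, s ++ (Cp g (m g)).2) = e g.
Proof.
have [t Et] := Cpow_head_m g; rewrite Et tgt_cat.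
by have := tgt_Cpow g (m g); rewrite /tgt Et.
Qed.

Lemma valid_cat (v : E) (s t : seq H) : valid (v, s) -> valid (tgt (v, s), t) -> valid (v, s ++ t).
Proof.
case: s => [|a s] //; rewrite /valid /= => /and3P[ea ps oks].
case: t => [|b t]; first by rewrite cats0 ea ps oks.
rewrite /tgt /= => /and3P[eb pt okt].
rewrite ea cat_path ps /= eq_sym eb pt all_cat /=.
by case/andP: oks => -> ->; case/andP: okt => -> ->.
Qed.

Lemma valid_behead (v : E) (a : H) (s : seq H) : valid (v, a :: s) -> valid (e (sg a), s).
Proof.
case: s => [|b s] //; rewrite /valid /= => /and3P[_ /andP[eab ps] /andP[_ oks]].
by rewrite -(eqP eab) eqxx ps oks.
Qed.

Lemma valid_Cpow g : ~~ trunc g -> valid (Cp g (m g)).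
Proof.
move=> ng; rewrite /valid Cpow_traj.
have := muln_gt0 (val g) (m g); rewrite val_gt0 m_gt0.
case: (val g * m g)%N => [|n] //= _.
rewrite eqxx /=; apply/andP; split.
  by apply: sub_path (fpath_traject sg g n) => x y /eqP <-.
rewrite /arrow_ok ng /=; apply/allP => z /traj_conn c.
by rewrite (conn_trunc c) (conn_trunc (fconnect1 sg g)).
Qed.


Lemma fix_val x : sg x = x -> val x = 1%N.
Proof.
move=> sx; apply/eqP/card1P; exists x => y; rewrite !inE.
apply/idP/eqP => [c|->]; last exact: connect0.
rewrite -(iter_findex c); elim: (findex _ x y) => //= n ->; exact: sx.
Qed.

Lemma rel2_ne h r :
  (exists2 w, r w != 0%R & w.1 != e h) -> r <> rel2 h.
Proof.
case=> w rw wh erh; move: rw; rewrite erh /rel2 /pathf.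
by case: (w =P _) => [ew|]; [move: wh; rewrite ew eqxx | rewrite eqxx].
Qed.

Lemma part3a h
  (min : forall rho', (forall x, rho' x -> rho x) -> ~ (forall x, rho x -> rho' x) ->
     ~ generates rho') :
  trunc h -> rho (rel2 h) -> trunc (iota (sg (iota h))).
Proof.
move=> th r2; apply: NNPP => /negP ntx.
set ih := iota h in ntx *; set X := sg ih in ntx *.
have v2 : (1 < val ih)%N by apply: val_iota_trunc.
have nih : ~~ trunc ih by rewrite /trunc_at; case: eqP v2 => // ->.
have mX : m X = m ih by apply: m_succ.
have tX : trunc X = trunc ih by apply: conn_trunc; apply: fconnect1.
have nX : ~~ trunc X by rewrite tX.
have eXh : e X != e h.
  apply/eqP => /esym /edge_inv [Xh|Xih].
    have c : fconnect sg ih h by rewrite -Xh; apply: fconnect1.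
    by move: v2; rewrite -(conn_val c) (trunc_val th).
  by move: v2; rewrite fix_val.
have [y ey] := edge_rep_ex X.
have [ny niy] : ~~ trunc y /\ ~~ trunc (iota y).
  by case: (edge_inv (esym (edge_rep_e ey))) => ->; rewrite ?iotaK; split.
have r1 : rho (rel1 y) := part1 ey ny niy.
have nc : ~~ in_some_cycle ih (iota X).
  apply/existsP => -[g /andP[_ inf]]; have := infix_Cpow inf.
  by move/eqP; rewrite -/X (negbTE (iota_neq X)).
have r3 : rho (rel3 ih (iota X)).
  by apply: part2 => //; rewrite e_iota.
pose rho' x := rho x /\ x <> rel2 h.
apply: (min rho'); first by move=> x [].
  by move=> all; case: (all _ r2).
have r1' : rho' (rel1 y).
  split => //; apply: rel2_ne; exists (Cp y (m y)).
    rewrite /rel1 /pathf eqxx Cpow_neq_iota mulr1 mulr0 subr0.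
    exact: quant_nz.
  by rewrite /= (edge_rep_e ey).
have r3' : rho' (rel3 ih (iota X)).
  split => // erh; have := congr1 (fun f : qfun G => f (e ih, [:: ih; iota X])) erh.
  rewrite /rel3 /rel2 /pathf eqxx.
  case: (_ =P _) => [E|_]; last by move/eqP; rewrite oner_eq0.
  move: (congr1 (fun z : qpath G => size z.2) E); rewrite /= size_cat size_Cpow /=.
  have := leq_mul v2 (m_gt0 ih); move: (val ih * m ih)%N => k; lia.
move=> x; split.
  by move=> gx; apply/(rho_gen x).1; apply: gen_mono gx => r [].
move=> bx; have := (rho_gen x).2 bx; apply: gen_subst => r p q rr vp vq.
case: (classic (r = rel2 h)) => [rh|nrh]; last first.
  exists (1%R, 0%R, p, q, p, q, r, r); split => //; first by rewrite vp vq.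
  by move=> w; rewrite mul1r mul0r addr0.
subst r.
set P : qpath G := (e h, (Cp ih (m ih)).2 ++ [:: ih]).
have tPp : tgt (p.1, p.2 ++ P.2) = e X.
  by rewrite /P /= catA tgt_cat.
case: (boolP ((tgt p == e h) && (q.1 == e X))) => [/andP[/eqP tp /eqP tq]|ncond];
  last first.
  exists (0%R, 0%R, p, q, p, q, rel1 y, rel1 y); split => //; first by rewrite vp vq.
  move=> w; rewrite /rel2 -/P sand_pathf pcat_none ?mul0r ?addr0 //.
  by rewrite tPp [e X == _]eq_sym.
set P' : qpath G := (p.1, p.2 ++ [:: ih]).
have [t Et] := Cpow_head_m (iota X).
set q3 : qpath G := (e (sg (iota X)), t ++ q.2).
have vP' : valid P'.
  rewrite /P'; apply: valid_cat; first by rewrite -surjective_pairing.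
  by rewrite -surjective_pairing tp /valid /= /ih e_iota eqxx /arrow_ok nih.
have vq3 : valid q3.
  apply: (valid_behead (v := e X)); rewrite -cat_cons -Et.
  apply: valid_cat.
    by have := valid_Cpow ntx; rewrite [Cp _ _]surjective_pairing /= e_iota.
  have := tgt_cat_Cpow (e X) [::] (iota X); rewrite /= e_iota => ->.
  by rewrite -tq -surjective_pairing.
have tP' : tgt P' = e X by rewrite /P' tgt_cat.
have Hg g : e g = e X -> pcat P' (Cp g (m g)) q =
    Some (p.1, (p.2 ++ [:: ih]) ++ (Cp g (m g)).2 ++ q.2).
  by move=> eg; rewrite pcat_some //= ?tP' // tgt_cat_Cpow eg.
have H0 : pcat p P q = Some (p.1, (p.2 ++ [:: ih]) ++ (Cp X (m X)).2 ++ q.2).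
  rewrite pcat_some //=; last by rewrite tPp.
  by rewrite Cpow_rot -/X mX -catA.
have H3 : pcat p (e ih, [:: ih; iota X]) q3 =
    Some (p.1, (p.2 ++ [:: ih]) ++ (Cp (iota X) (m (iota X))).2 ++ q.2).
  rewrite pcat_some; [|by rewrite tp /ih e_iota|by rewrite tgt_cat].
  by rewrite Et /= -catA.
have qX := quant_nz nX ntx.
set bX := fun w : qpath G =>
  ((Some (p.1, (p.2 ++ [:: ih]) ++ (Cp X (m X)).2 ++ q.2) == Some w)%:R : K)%R.
set bI := fun w : qpath G =>
  ((Some (p.1, (p.2 ++ [:: ih]) ++ (Cp (iota X) (m (iota X))).2 ++ q.2) == Some w)%:R : K)%R.
have S0 w : sandwich p (rel2 h) q w = bX w by rewrite /rel2 -/P sand_pathf H0.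
have S3 w : sandwich p (rel3 ih (iota X)) q3 w = bI w by rewrite /rel3 sand_pathf H3.
case: (edge_inv (esym (edge_rep_e ey))) => yE; subst y.
  have S1 w : sandwich P' (rel1 X) q w = (@quant K G X * bX w - @quant K G (iota X) * bI w)%R.
    by rewrite /rel1 sand_lin !sand_pathf !Hg ?e_iota.
  exists ((@quant K G X)^-1%R, (@quant K G (iota X) / @quant K G X)%R, P', q, p, q3,
    rel1 X, rel3 ih (iota X)); split => //; first by rewrite vP' vq vp vq3.
  by move=> w; rewrite S0 S1 S3; field.
have S1 w : sandwich P' (rel1 (iota X)) q w =
    (@quant K G (iota X) * bI w - @quant K G X * bX w)%R.
  by rewrite /rel1 sand_lin !sand_pathf iotaK !Hg ?e_iota.
exists ((- (@quant K G X)^-1)%R, (@quant K G (iota X) / @quant K G X)%R, P', q, p, q3,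
  rel1 (iota X), rel3 ih (iota X)); split => //; first by rewrite vP' vq vp vq3.
by move=> w; rewrite S0 S1 S3; field.
Qed.

End Aux.

Theorem lemma2p1 (K : fieldType) (G : qbgraph K) (HG : qbg_axioms G)
  (notA2 : ~ is_A2 G) (rho : qfun G -> Prop)
  (rho_sub : forall x, rho x -> brauer_relations x)
  (rho_min : minimal_generating rho) :
  [/\ (forall (s : edgeT G) (h : halfT G), edge_rep s = Some h ->
         ~~ trunc_at h -> ~~ trunc_at (@other K G h) -> rho (rel1 h)),
      (forall a b : halfT G, arrow_ok a -> arrow_ok b ->
         @edge K G (@succ K G a) = @edge K G b -> ~~ in_some_cycle a b ->
         rho (rel3 a b)) &
      (forall h : halfT G, trunc_at h ->
         (rho (rel2 h) <->
          trunc_at (@other K G (@succ K G (@other K G h)))))].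
Proof.
case: rho_min => gen min; split.
- move=> s h es nh nih; exact: (part1 HG rho_sub gen es nh nih).
- move=> a b oa ob eab nc; exact: (part2 HG notA2 rho_sub gen oa ob eab nc).
- move=> h th; split.
    exact: (part3a HG notA2 rho_sub gen min th).
  exact: (part3b HG notA2 rho_sub gen th).
Qed.
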